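(* Let $\mathcal H_A,\mathcal H_B$ be finite-dimensional complex Hilbert spaces and let $\rho$ be a separable density matrix on $\mathcal H_A\otimes\mathcal H_B$. Let $\rho^{T_B}=(\mathbf 1_A\otimes T)\rho$, where $T$ is transposition in a chosen basis of $\mathcal H_B$. Then $\mathcal L_{\mathcal E}(\rho)=\mathcal L_{\mathcal E}(\rho^{T_B})$.
   Context: $\rho$ is separable if $\rho=\sum_i p_i\,|\psi_i\rangle\langle\psi_i|\otimes|\phi_i\rangle\langle\phi_i|$ with $p_i>0$ and unit vectors $\psi_i\in\mathcal H_A,\phi_i\in\mathcal H_B$ (a separable decomposition). For a separable $\rho$, the optimal ensemble cardinality $\mathcal L_{\mathcal E}(\rho)$ is the least number of distinct pure product states needed in a separable decomposition of $\rho$. *)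

(* Defs.v *)
From HB Require Import structures.
From mathcomp Require Import all_boot all_order all_algebra.
From mathcomp Require Import complex mxtens.
Set Implicit Arguments. Unset Strict Implicit. Unset Printing Implicit Defensive.
Import Order.TTheory GRing.Theory Num.Theory.
Local Open Scope ring_scope.

Definition adj {C : numClosedFieldType} {m n} (A : 'M[C]_(m, n)) : 'M[C]_(n, m) :=
  (map_mx Num.conj A)^T.

Definition unit_vec {C : numClosedFieldType} {m} (v : 'cV[C]_m) : Prop :=
  adj v *m v = 1.

Definition proj {C : numClosedFieldType} {m} (v : 'cV[C]_m) : 'M[C]_m :=
  v *m adj v.

(* separable decomposition of rho on C^m (x) C^n with k distinct pure product states;
   the tensor product is the Kronecker product tensmx (index (i,j) |-> i*n+j). *)
Definition sep_decomp {C : numClosedFieldType} {m n}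
    (rho : 'M[C]_(m * n)) (k : nat) : Prop :=
  exists (p : 'I_k -> C) (psi : 'I_k -> 'cV[C]_m) (phi : 'I_k -> 'cV[C]_n),
    [/\ forall i, 0 < p i,
        forall i, unit_vec (psi i),
        forall i, unit_vec (phi i),
        injective (fun i => proj (psi i) *t proj (phi i)) &
        rho = \sum_(i < k) p i *: (proj (psi i) *t proj (phi i))].

Definition separable {C : numClosedFieldType} {m n} (rho : 'M[C]_(m * n)) : Prop :=
  exists k, sep_decomp rho k.

(* k is the optimal ensemble cardinality L_E(rho): the least k admitting
   a separable decomposition with k distinct pure product states. *)
Definition is_optimal_card {C : numClosedFieldType} {m n}
    (rho : 'M[C]_(m * n)) (k : nat) : Prop :=
  sep_decomp rho k /\ forall k', sep_decomp rho k' -> (k <= k')%N.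

Definition psd {C : numClosedFieldType} {N} (A : 'M[C]_N) : Prop :=
  adj A = A /\ forall v : 'cV[C]_N, 0 <= (adj v *m A *m v) 0 0.

Definition density {C : numClosedFieldType} {N} (A : 'M[C]_N) : Prop :=
  psd A /\ \tr A = 1.

Definition ptransB {C : numClosedFieldType} {m n} (rho : 'M[C]_(m * n)) : 'M[C]_(m * n) :=
  \matrix_(a, b)
    rho (mxtens_index ((mxtens_unindex a).1, (mxtens_unindex b).2))
        (mxtens_index ((mxtens_unindex b).1, (mxtens_unindex a).2)).

(* Main.v *)
Require Import Defs.
From mathcomp Require Import all_boot all_order all_algebra.
From mathcomp Require Import complex mxtens.
Set Implicit Arguments. Unset Strict Implicit. Unset Printing Implicit Defensive.
Import Order.TTheory GRing.Theory Num.Theory.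
Local Open Scope ring_scope.

Section S.
Variable C : numClosedFieldType.

Lemma ptransB_tens m n (A : 'M[C]_m) (B : 'M[C]_n) :
  ptransB (A *t B) = A *t B^T.
Proof. by apply/matrixP=> a b; rewrite !mxE !mxtens_indexK /=. Qed.

Lemma ptransBK m n : involutive (@ptransB C m n).
Proof.
move=> M; apply/matrixP=> a b; rewrite !mxE !mxtens_indexK /=.
by rewrite -[in RHS](mxtens_unindexK a) -[in RHS](mxtens_unindexK b).
Qed.

Lemma ptransB_sum m n k (p : 'I_k -> C) (F : 'I_k -> 'M[C]_(m * n)) :
  ptransB (\sum_(i < k) p i *: F i) = \sum_(i < k) p i *: ptransB (F i).
Proof.
apply/matrixP=> a b; rewrite !mxE !summxE; apply: eq_bigr => i _.
by rewrite !mxE.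
Qed.

Definition cj m (v : 'cV[C]_m) := map_mx Num.conj v.

Lemma proj_tr m (v : 'cV[C]_m) : (proj v)^T = proj (cj v).
Proof.
apply/matrixP=> a b; rewrite !mxE !big_ord1 !mxE conjCK mulrC //.
Qed.

Lemma unit_cj m (v : 'cV[C]_m) : unit_vec v -> unit_vec (cj v).
Proof.
rewrite /unit_vec => H; apply/matrixP=> a b.
have := congr1 (fun M : 'M[C]_1 => M a b) H.
rewrite !mxE => <-; apply: eq_bigr => i _; rewrite !mxE conjCK mulrC.
by rewrite (ord1 a) (ord1 b).
Qed.

Lemma sep_ptransB m n (rho : 'M[C]_(m * n)) k :
  sep_decomp rho k -> sep_decomp (ptransB rho) k.
Proof.
move=> [p [psi [phi [Hp Hpsi Hphi Hinj Hrho]]]].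
exists p, psi, (fun i => cj (phi i)); split => //.
- by move=> i; apply: unit_cj.
- move=> i j /= E; apply: Hinj => /=.
  apply: (can_inj (@ptransBK m n)).
  by rewrite !ptransB_tens !proj_tr.
- rewrite Hrho ptransB_sum; apply: eq_bigr => i _.
  by rewrite ptransB_tens proj_tr.
Qed.

Lemma sep_ptransB_iff m n (rho : 'M[C]_(m * n)) k :
  sep_decomp rho k <-> sep_decomp (ptransB rho) k.
Proof.
split; first exact: sep_ptransB.
by move=> /sep_ptransB; rewrite ptransBK.
Qed.

End S.

Theorem lemma1 (R : rcfType) (m n : nat) (rho : 'M[R[i]]_(m * n)) :
  density rho -> separable rho ->
  forall k : nat, is_optimal_card rho k <-> is_optimal_card (ptransB rho) k.
Proof.
move=> _ _ k; rewrite /is_optimal_card.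
split=> [[H1 H2]|[H1 H2]]; split.
- exact: sep_ptransB.
- by move=> kk Hk; apply: H2; rewrite -[rho]ptransBK; apply: sep_ptransB.
- by rewrite -[rho]ptransBK; apply: sep_ptransB.
- by move=> kk Hk; apply: H2; apply: sep_ptransB.
Qed.
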